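(* Let $J=JCK(Z,\delta)$. Then $\dim_{\mathbb F}\mathrm{Inder}(J)=\dim_{\mathbb F}J=8\dim_{\mathbb F}Z$ (dimensions as cardinals).
   Context: Let $\mathbb F$ be a field of characteristic $\neq 2$, $Z$ a unital commutative associative $\mathbb F$-algebra, and $\delta$ a derivation of $Z$ such that $Z\delta(Z)=Z$ (the $\mathbb F$-span of all products $f\delta(g)$, $f,g\in Z$, is $Z$). The Cheng-Kac Jordan superalgebra $J=JCK(Z,\delta)=J_{\bar0}\oplus J_{\bar1}$ is defined as follows: $J_{\bar0}=Z1\oplus Zw_1\oplus Zw_2\oplus Zw_3$ and $J_{\bar1}=Zx\oplus Zx_1\oplus Zx_2\oplus Zx_3$ are free $Z$-modules of rank 4; $J_{\bar0}$ is the $Z$-algebra $(\mathbb F1\oplus\mathbb Fw_1\oplus\mathbb Fw_2\oplus\mathbb Fw_3)\otimes_{\mathbb F}Z$ with $1$ the identity, $w_1^2=w_2^2=1$, $w_3^2=-1$, $w_iw_j=0$ for $i\ne j$. For $f,g\in Z$ and $i,j\in\{1,2,3\}$ the remaining products are: $f(gx)=(fg)x$, $f(gx_j)=(fg)x_j$, $(fw_i)(gx)=(\delta(f)g)x_i$, $(fw_i)(gx_j)=-(fg)x_{i\times j}$, $(fx)(gx)=\delta(f)g-f\delta(g)$, $(fx)(gx_j)=-(fg)w_j$, $(fx_i)(gx)=(fg)w_i$, $(fx_i)(gx_j)=0$, extended by supercommutativity ($ab=(-1)^{|a||b|}ba$), where $x_{1\times2}=-x_{2\times1}=x_3$, $x_{1\times3}=-x_{3\times1}=x_2$,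 $x_{3\times2}=-x_{2\times3}=x_1$, $x_{i\times i}=0$. $D(a,b)$ is the map $c\mapsto a(bc)-(-1)^{|a||b|}b(ac)$, and $\mathrm{Inder}(J)$ is the span of all $D(a,b)$, $a,b\in J$ homogeneous. *)

(* Defs.v *)
From HB Require Import structures.
From mathcomp Require Import all_boot all_order all_algebra.
Set Implicit Arguments. Unset Strict Implicit. Unset Printing Implicit Defensive.
Import GRing.Theory.
Local Open Scope ring_scope.

(* Underlying F-vector space of the Cheng-Kac superalgebra JCK(Z, delta):
   J = J_0 (+) J_1, each a free Z-module of rank 4.
   Even part (a.1): coordinates w.r.t. 1, w1, w2, w3 (indices 0,1,2,3).
   Odd  part (a.2): coordinates w.r.t. x, x1, x2, x3 (indices 0,1,2,3). *)
Notation JCK Z := ({ffun 'I_4 -> Z} * {ffun 'I_4 -> Z})%type.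

Definition o4 (n : nat) : 'I_4 := inord n.

Section CK.
Variables (F : fieldType) (Z : comAlgType F) (delta : Z -> Z).

Definition ck_ee (a b : {ffun 'I_4 -> Z}) : {ffun 'I_4 -> Z} :=
  [ffun k : 'I_4 => match nat_of_ord k with
    | 0 => a (o4 0) * b (o4 0) + a (o4 1) * b (o4 1) + a (o4 2) * b (o4 2)
           - a (o4 3) * b (o4 3)
    | _ => a (o4 0) * b k + a k * b (o4 0) end].

(* J_0 x J_1 -> J_1 (and J_1 x J_0 -> J_1 by supercommutativity) *)
Definition ck_eo (a b : {ffun 'I_4 -> Z}) : {ffun 'I_4 -> Z} :=
  [ffun k : 'I_4 => match nat_of_ord k with
    | 0 => a (o4 0) * b (o4 0)
    | 1 => a (o4 0) * b (o4 1) + delta (a (o4 1)) * b (o4 0)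
           + a (o4 2) * b (o4 3) - a (o4 3) * b (o4 2)
    | 2 => a (o4 0) * b (o4 2) + delta (a (o4 2)) * b (o4 0)
           + a (o4 3) * b (o4 1) - a (o4 1) * b (o4 3)
    | _ => a (o4 0) * b (o4 3) + delta (a (o4 3)) * b (o4 0)
           + a (o4 2) * b (o4 1) - a (o4 1) * b (o4 2) end].

Definition ck_oo (a b : {ffun 'I_4 -> Z}) : {ffun 'I_4 -> Z} :=
  [ffun k : 'I_4 => match nat_of_ord k with
    | 0 => delta (a (o4 0)) * b (o4 0) - a (o4 0) * delta (b (o4 0))
    | _ => a k * b (o4 0) - a (o4 0) * b k end].

Definition ck_mul (a b : JCK Z) : JCK Z :=
  (ck_ee a.1 b.1 + ck_oo a.2 b.2, ck_eo a.1 b.2 + ck_eo b.1 a.2).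

Definition ck_homog (p : bool) (a : JCK Z) : Prop :=
  if p then a.1 = 0 else a.2 = 0.

Definition ck_D (p q : bool) (a b : JCK Z) (c : JCK Z) : JCK Z :=
  ck_mul a (ck_mul b c) - (if p && q then -1 else 1) *: ck_mul b (ck_mul a c).

Definition in_Inder (phi : JCK Z -> JCK Z) : Prop :=
  exists (n : nat) (p q : 'I_n -> bool) (a b : 'I_n -> JCK Z) (c : 'I_n -> F),
    (forall k, ck_homog (p k) (a k) /\ ck_homog (q k) (b k)) /\
    forall x, phi x = \sum_(k < n) c k *: ck_D (p k) (q k) (a k) (b k) x.

End CK.

Definition is_basis (F : fieldType) (V : lmodType F) (I : Type) (e : I -> V) : Prop :=
  (forall (n : nat) (f : 'I_n -> I) (c : 'I_n -> F), injective f ->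
     \sum_(k < n) c k *: e (f k) = 0 -> forall k, c k = 0) /\
  (forall v : V, exists (n : nat) (f : 'I_n -> I) (c : 'I_n -> F),
     v = \sum_(k < n) c k *: e (f k)).

Definition is_basis_fun (F : fieldType) (X : Type) (V : lmodType F)
    (S : (X -> V) -> Prop) (I : Type) (e : I -> X -> V) : Prop :=
  (forall i, S (e i)) /\
  (forall (n : nat) (f : 'I_n -> I) (c : 'I_n -> F), injective f ->
     (forall x, \sum_(k < n) c k *: e (f k) x = 0) -> forall k, c k = 0) /\
  (forall phi, S phi -> exists (n : nat) (f : 'I_n -> I) (c : 'I_n -> F),
     forall x, phi x = \sum_(k < n) c k *: e (f k) x).

(* Main.v *)
Require Import Defs.
From HB Require Import structures.
From mathcomp Require Import all_boot all_order all_algebra.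
From mathcomp Require Import ring.
Import GRing.Theory.
Set Implicit Arguments. Unset Strict Implicit. Unset Printing Implicit Defensive.
Local Open Scope ring_scope.


Lemma o4K n : (n < 4)%N -> nat_of_ord (o4 n) = n.
Proof. by move=> h; rewrite /o4 inordK. Qed.

Lemma ord4P (k : 'I_4) : k = o4 0 \/ k = o4 1 \/ k = o4 2 \/ k = o4 3.
Proof.
case: k => [[|[|[|[|n]]]] Hn].
- by left; apply/val_inj; rewrite /= o4K.
- by right; left; apply/val_inj; rewrite /= o4K.
- by right; right; left; apply/val_inj; rewrite /= o4K.
- by right; right; right; apply/val_inj; rewrite /= o4K.
- by [].
Qed.

Lemma JCK_ext (F : fieldType) (Z : comAlgType F) (u v : JCK Z) :
  (forall i, u.1 i = v.1 i) -> (forall i, u.2 i = v.2 i) -> u = v.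
Proof. by case: u v => [u1 u2] [v1 v2] /= H1 H2; congr (_, _); apply/ffunP. Qed.

Lemma fstB (F : fieldType) (Z : comAlgType F) (u v : JCK Z) : (u - v).1 = u.1 - v.1. Proof. by []. Qed.
Lemma sndB (F : fieldType) (Z : comAlgType F) (u v : JCK Z) : (u - v).2 = u.2 - v.2. Proof. by []. Qed.
Lemma fstD (F : fieldType) (Z : comAlgType F) (u v : JCK Z) : (u + v).1 = u.1 + v.1. Proof. by []. Qed.
Lemma sndD (F : fieldType) (Z : comAlgType F) (u v : JCK Z) : (u + v).2 = u.2 + v.2. Proof. by []. Qed.
Lemma fstZ (F : fieldType) (Z : comAlgType F) a (u : JCK Z) : (a *: u).1 = a *: u.1. Proof. by []. Qed.
Lemma sndZ (F : fieldType) (Z : comAlgType F) a (u : JCK Z) : (a *: u).2 = a *: u.2. Proof. by []. Qed.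
Lemma fst0 (F : fieldType) (Z : comAlgType F) : (0 : JCK Z).1 = 0. Proof. by []. Qed.
Lemma snd0 (F : fieldType) (Z : comAlgType F) : (0 : JCK Z).2 = 0. Proof. by []. Qed.
Lemma fstS (F : fieldType) (Z : comAlgType F) n (G : 'I_n -> JCK Z) : (\sum_(k < n) G k).1 = \sum_(k < n) (G k).1.
Proof. by elim/big_rec2: _ => // i y1 y2 _ <-. Qed.
Lemma sndS (F : fieldType) (Z : comAlgType F) n (G : 'I_n -> JCK Z) : (\sum_(k < n) G k).2 = \sum_(k < n) (G k).2.
Proof. by elim/big_rec2: _ => // i y1 y2 _ <-. Qed.

Lemma addfE (F : fieldType) (Z : comAlgType F) (f g : {ffun 'I_4 -> Z}) i : (f + g) i = f i + g i.
Proof. by rewrite ffunE. Qed.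
Lemma subfE (F : fieldType) (Z : comAlgType F) (f g : {ffun 'I_4 -> Z}) i : (f - g) i = f i - g i.
Proof. by rewrite !ffunE. Qed.
Lemma scalefE (F : fieldType) (Z : comAlgType F) a (f : {ffun 'I_4 -> Z}) i : (a *: f) i = a *: f i.
Proof. by rewrite ffunE. Qed.
Lemma negfE (F : fieldType) (Z : comAlgType F) (f : {ffun 'I_4 -> Z}) i : (- f) i = - f i.
Proof. by rewrite ffunE. Qed.
Lemma pr1 (A B : Type) (x : A) (y : B) : (x, y).1 = x. Proof. by []. Qed.
Lemma pr2 (A B : Type) (x : A) (y : B) : (x, y).2 = y. Proof. by []. Qed.
Lemma zerofE (F : fieldType) (Z : comAlgType F) i : (0 : {ffun 'I_4 -> Z}) i = 0.
Proof. by rewrite ffunE. Qed.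

Definition mk4 (Z : Type) (x0 x1 x2 x3 : Z) : {ffun 'I_4 -> Z} :=
  [ffun i : 'I_4 => match nat_of_ord i with 0 => x0 | 1 => x1 | 2 => x2 | _ => x3 end].

Lemma mk0 (Z : Type) (x0 x1 x2 x3 : Z) : mk4 x0 x1 x2 x3 (o4 0) = x0.
Proof. by rewrite ffunE o4K. Qed.

Lemma mk1 (Z : Type) (x0 x1 x2 x3 : Z) : mk4 x0 x1 x2 x3 (o4 1) = x1.
Proof. by rewrite ffunE o4K. Qed.

Lemma mk2 (Z : Type) (x0 x1 x2 x3 : Z) : mk4 x0 x1 x2 x3 (o4 2) = x2.
Proof. by rewrite ffunE o4K. Qed.

Lemma mk3 (Z : Type) (x0 x1 x2 x3 : Z) : mk4 x0 x1 x2 x3 (o4 3) = x3.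
Proof. by rewrite ffunE o4K. Qed.

Definition PhiE (F : fieldType) (Z : comAlgType F) (delta : Z -> Z) (v c : JCK Z) : {ffun 'I_4 -> Z} :=
  [ffun i : 'I_4 => match nat_of_ord i with
   | 0 => (v.1 (o4 0)) * (c.2 (o4 0)) - (v.2 (o4 1)) * (c.2 (o4 1)) - (v.2 (o4 2)) * (c.2 (o4 2)) + (v.2 (o4 3)) * (c.2 (o4 3)) - 2%:R * ((v.2 (o4 0)) * delta (c.1 (o4 0)))
   | 1 => (v.1 (o4 2)) * (c.1 (o4 3)) - (v.1 (o4 3)) * (c.1 (o4 2)) + (delta (v.2 (o4 1)) * (c.2 (o4 0)) - (v.2 (o4 1)) * delta (c.2 (o4 0))) + (v.2 (o4 2)) * (c.2 (o4 3)) - (v.2 (o4 3)) * (c.2 (o4 2)) - 2%:R * ((v.2 (o4 0)) * delta (c.1 (o4 1)))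
   | 2 => - ((v.1 (o4 1)) * (c.1 (o4 3))) + (v.1 (o4 3)) * (c.1 (o4 1)) - (v.2 (o4 1)) * (c.2 (o4 3)) + (delta (v.2 (o4 2)) * (c.2 (o4 0)) - (v.2 (o4 2)) * delta (c.2 (o4 0))) + (v.2 (o4 3)) * (c.2 (o4 1)) - 2%:R * ((v.2 (o4 0)) * delta (c.1 (o4 2)))
   | _ => - ((v.1 (o4 1)) * (c.1 (o4 2))) + (v.1 (o4 2)) * (c.1 (o4 1)) - (v.2 (o4 1)) * (c.2 (o4 2)) + (v.2 (o4 2)) * (c.2 (o4 1)) + (delta (v.2 (o4 3)) * (c.2 (o4 0)) - (v.2 (o4 3)) * delta (c.2 (o4 0))) - 2%:R * ((v.2 (o4 0)) * delta (c.1 (o4 3)))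
   end].

Definition PhiO (F : fieldType) (Z : comAlgType F) (delta : Z -> Z) (v c : JCK Z) : {ffun 'I_4 -> Z} :=
  [ffun i : 'I_4 => match nat_of_ord i with
   | 0 => - ((v.2 (o4 1)) * (c.1 (o4 1))) - (v.2 (o4 2)) * (c.1 (o4 2)) + (v.2 (o4 3)) * (c.1 (o4 3)) + delta (v.2 (o4 0)) * (c.2 (o4 0)) - 2%:R * ((v.2 (o4 0)) * delta (c.2 (o4 0)))
   | 1 => - ((v.1 (o4 0)) * (c.1 (o4 1))) + delta (v.1 (o4 1)) * (c.2 (o4 0)) + (v.1 (o4 2)) * (c.2 (o4 3)) - (v.1 (o4 3)) * (c.2 (o4 2)) - (v.2 (o4 1)) * delta (c.1 (o4 0)) + (v.2 (o4 2)) * delta (c.1 (o4 3)) - (v.2 (o4 3)) * delta (c.1 (o4 2)) - delta (v.2 (o4 0)) * (c.2 (o4 1)) - 2%:R * ((v.2 (o4 0)) * delta (c.2 (o4 1)))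
   | 2 => - ((v.1 (o4 0)) * (c.1 (o4 2))) - (v.1 (o4 1)) * (c.2 (o4 3)) + delta (v.1 (o4 2)) * (c.2 (o4 0)) + (v.1 (o4 3)) * (c.2 (o4 1)) - (v.2 (o4 1)) * delta (c.1 (o4 3)) - (v.2 (o4 2)) * delta (c.1 (o4 0)) + (v.2 (o4 3)) * delta (c.1 (o4 1)) - delta (v.2 (o4 0)) * (c.2 (o4 2)) - 2%:R * ((v.2 (o4 0)) * delta (c.2 (o4 2)))
   | _ => - ((v.1 (o4 0)) * (c.1 (o4 3))) - (v.1 (o4 1)) * (c.2 (o4 2)) + (v.1 (o4 2)) * (c.2 (o4 1)) + delta (v.1 (o4 3)) * (c.2 (o4 0)) - (v.2 (o4 1)) * delta (c.1 (o4 2)) + (v.2 (o4 2)) * delta (c.1 (o4 1)) - (v.2 (o4 3)) * delta (c.1 (o4 0)) - delta (v.2 (o4 0)) * (c.2 (o4 3)) - 2%:R * ((v.2 (o4 0)) * delta (c.2 (o4 3)))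
   end].

Definition Phi (F : fieldType) (Z : comAlgType F) (delta : Z -> Z) (v c : JCK Z) : JCK Z := (PhiE delta v c, PhiO delta v c).

Lemma Phi1 (F : fieldType) (Z : comAlgType F) (delta : Z -> Z) (v c : JCK Z) : (Phi delta v c).1 = PhiE delta v c. Proof. by []. Qed.

Lemma Phi2 (F : fieldType) (Z : comAlgType F) (delta : Z -> Z) (v c : JCK Z) : (Phi delta v c).2 = PhiO delta v c. Proof. by []. Qed.

Lemma PE0 (F : fieldType) (Z : comAlgType F) (delta : Z -> Z) (v c : JCK Z) :
  PhiE delta v c (o4 0) = (v.1 (o4 0)) * (c.2 (o4 0)) - (v.2 (o4 1)) * (c.2 (o4 1)) - (v.2 (o4 2)) * (c.2 (o4 2)) + (v.2 (o4 3)) * (c.2 (o4 3)) - 2%:R * ((v.2 (o4 0)) * delta (c.1 (o4 0))).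
Proof. by rewrite ffunE o4K. Qed.

Lemma PE1 (F : fieldType) (Z : comAlgType F) (delta : Z -> Z) (v c : JCK Z) :
  PhiE delta v c (o4 1) = (v.1 (o4 2)) * (c.1 (o4 3)) - (v.1 (o4 3)) * (c.1 (o4 2)) + (delta (v.2 (o4 1)) * (c.2 (o4 0)) - (v.2 (o4 1)) * delta (c.2 (o4 0))) + (v.2 (o4 2)) * (c.2 (o4 3)) - (v.2 (o4 3)) * (c.2 (o4 2)) - 2%:R * ((v.2 (o4 0)) * delta (c.1 (o4 1))).
Proof. by rewrite ffunE o4K. Qed.

Lemma PE2 (F : fieldType) (Z : comAlgType F) (delta : Z -> Z) (v c : JCK Z) :
  PhiE delta v c (o4 2) = - ((v.1 (o4 1)) * (c.1 (o4 3))) + (v.1 (o4 3)) * (c.1 (o4 1)) - (v.2 (o4 1)) * (c.2 (o4 3)) + (delta (v.2 (o4 2)) * (c.2 (o4 0)) - (v.2 (o4 2)) * delta (c.2 (o4 0))) + (v.2 (o4 3)) * (c.2 (o4 1)) - 2%:R * ((v.2 (o4 0)) * delta (c.1 (o4 2))).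
Proof. by rewrite ffunE o4K. Qed.

Lemma PE3 (F : fieldType) (Z : comAlgType F) (delta : Z -> Z) (v c : JCK Z) :
  PhiE delta v c (o4 3) = - ((v.1 (o4 1)) * (c.1 (o4 2))) + (v.1 (o4 2)) * (c.1 (o4 1)) - (v.2 (o4 1)) * (c.2 (o4 2)) + (v.2 (o4 2)) * (c.2 (o4 1)) + (delta (v.2 (o4 3)) * (c.2 (o4 0)) - (v.2 (o4 3)) * delta (c.2 (o4 0))) - 2%:R * ((v.2 (o4 0)) * delta (c.1 (o4 3))).
Proof. by rewrite ffunE o4K. Qed.

Lemma PO0 (F : fieldType) (Z : comAlgType F) (delta : Z -> Z) (v c : JCK Z) :
  PhiO delta v c (o4 0) = - ((v.2 (o4 1)) * (c.1 (o4 1))) - (v.2 (o4 2)) * (c.1 (o4 2)) + (v.2 (o4 3)) * (c.1 (o4 3)) + delta (v.2 (o4 0)) * (c.2 (o4 0)) - 2%:R * ((v.2 (o4 0)) * delta (c.2 (o4 0))).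
Proof. by rewrite ffunE o4K. Qed.

Lemma PO1 (F : fieldType) (Z : comAlgType F) (delta : Z -> Z) (v c : JCK Z) :
  PhiO delta v c (o4 1) = - ((v.1 (o4 0)) * (c.1 (o4 1))) + delta (v.1 (o4 1)) * (c.2 (o4 0)) + (v.1 (o4 2)) * (c.2 (o4 3)) - (v.1 (o4 3)) * (c.2 (o4 2)) - (v.2 (o4 1)) * delta (c.1 (o4 0)) + (v.2 (o4 2)) * delta (c.1 (o4 3)) - (v.2 (o4 3)) * delta (c.1 (o4 2)) - delta (v.2 (o4 0)) * (c.2 (o4 1)) - 2%:R * ((v.2 (o4 0)) * delta (c.2 (o4 1))).
Proof. by rewrite ffunE o4K. Qed.

Lemma PO2 (F : fieldType) (Z : comAlgType F) (delta : Z -> Z) (v c : JCK Z) :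
  PhiO delta v c (o4 2) = - ((v.1 (o4 0)) * (c.1 (o4 2))) - (v.1 (o4 1)) * (c.2 (o4 3)) + delta (v.1 (o4 2)) * (c.2 (o4 0)) + (v.1 (o4 3)) * (c.2 (o4 1)) - (v.2 (o4 1)) * delta (c.1 (o4 3)) - (v.2 (o4 2)) * delta (c.1 (o4 0)) + (v.2 (o4 3)) * delta (c.1 (o4 1)) - delta (v.2 (o4 0)) * (c.2 (o4 2)) - 2%:R * ((v.2 (o4 0)) * delta (c.2 (o4 2))).
Proof. by rewrite ffunE o4K. Qed.

Lemma PO3 (F : fieldType) (Z : comAlgType F) (delta : Z -> Z) (v c : JCK Z) :
  PhiO delta v c (o4 3) = - ((v.1 (o4 0)) * (c.1 (o4 3))) - (v.1 (o4 1)) * (c.2 (o4 2)) + (v.1 (o4 2)) * (c.2 (o4 1)) + delta (v.1 (o4 3)) * (c.2 (o4 0)) - (v.2 (o4 1)) * delta (c.1 (o4 2)) + (v.2 (o4 2)) * delta (c.1 (o4 1)) - (v.2 (o4 3)) * delta (c.1 (o4 0)) - delta (v.2 (o4 0)) * (c.2 (o4 3)) - 2%:R * ((v.2 (o4 0)) * delta (c.2 (o4 3))).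
Proof. by rewrite ffunE o4K. Qed.

Lemma ee0 (F : fieldType) (Z : comAlgType F) (a b : {ffun 'I_4 -> Z}) :
  ck_ee a b (o4 0) = a (o4 0) * b (o4 0) + a (o4 1) * b (o4 1) + a (o4 2) * b (o4 2) - a (o4 3) * b (o4 3).
Proof. by rewrite ffunE o4K. Qed.

Lemma ee1 (F : fieldType) (Z : comAlgType F) (a b : {ffun 'I_4 -> Z}) :
  ck_ee a b (o4 1) = a (o4 0) * b (o4 1) + a (o4 1) * b (o4 0).
Proof. by rewrite ffunE o4K. Qed.

Lemma ee2 (F : fieldType) (Z : comAlgType F) (a b : {ffun 'I_4 -> Z}) :
  ck_ee a b (o4 2) = a (o4 0) * b (o4 2) + a (o4 2) * b (o4 0).
Proof. by rewrite ffunE o4K. Qed.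

Lemma ee3 (F : fieldType) (Z : comAlgType F) (a b : {ffun 'I_4 -> Z}) :
  ck_ee a b (o4 3) = a (o4 0) * b (o4 3) + a (o4 3) * b (o4 0).
Proof. by rewrite ffunE o4K. Qed.

Lemma eo0 (F : fieldType) (Z : comAlgType F) (delta : Z -> Z) (a b : {ffun 'I_4 -> Z}) :
  ck_eo delta a b (o4 0) = a (o4 0) * b (o4 0).
Proof. by rewrite ffunE o4K. Qed.

Lemma eo1 (F : fieldType) (Z : comAlgType F) (delta : Z -> Z) (a b : {ffun 'I_4 -> Z}) :
  ck_eo delta a b (o4 1) = a (o4 0) * b (o4 1) + delta (a (o4 1)) * b (o4 0) + a (o4 2) * b (o4 3) - a (o4 3) * b (o4 2).
Proof. by rewrite ffunE o4K. Qed.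

Lemma eo2 (F : fieldType) (Z : comAlgType F) (delta : Z -> Z) (a b : {ffun 'I_4 -> Z}) :
  ck_eo delta a b (o4 2) = a (o4 0) * b (o4 2) + delta (a (o4 2)) * b (o4 0) + a (o4 3) * b (o4 1) - a (o4 1) * b (o4 3).
Proof. by rewrite ffunE o4K. Qed.

Lemma eo3 (F : fieldType) (Z : comAlgType F) (delta : Z -> Z) (a b : {ffun 'I_4 -> Z}) :
  ck_eo delta a b (o4 3) = a (o4 0) * b (o4 3) + delta (a (o4 3)) * b (o4 0) + a (o4 2) * b (o4 1) - a (o4 1) * b (o4 2).
Proof. by rewrite ffunE o4K. Qed.

Lemma oo0 (F : fieldType) (Z : comAlgType F) (delta : Z -> Z) (a b : {ffun 'I_4 -> Z}) :
  ck_oo delta a b (o4 0) = delta (a (o4 0)) * b (o4 0) - a (o4 0) * delta (b (o4 0)).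
Proof. by rewrite ffunE o4K. Qed.

Lemma oo1 (F : fieldType) (Z : comAlgType F) (delta : Z -> Z) (a b : {ffun 'I_4 -> Z}) :
  ck_oo delta a b (o4 1) = a (o4 1) * b (o4 0) - a (o4 0) * b (o4 1).
Proof. by rewrite ffunE o4K. Qed.

Lemma oo2 (F : fieldType) (Z : comAlgType F) (delta : Z -> Z) (a b : {ffun 'I_4 -> Z}) :
  ck_oo delta a b (o4 2) = a (o4 2) * b (o4 0) - a (o4 0) * b (o4 2).
Proof. by rewrite ffunE o4K. Qed.

Lemma oo3 (F : fieldType) (Z : comAlgType F) (delta : Z -> Z) (a b : {ffun 'I_4 -> Z}) :
  ck_oo delta a b (o4 3) = a (o4 3) * b (o4 0) - a (o4 0) * b (o4 3).
Proof. by rewrite ffunE o4K. Qed.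


Definition VFF (F : fieldType) (Z : comAlgType F) (a b : {ffun 'I_4 -> Z}) : JCK Z :=
  (mk4 0 (a (o4 2) * b (o4 3) - a (o4 3) * b (o4 2))
         (- (a (o4 1) * b (o4 3) - a (o4 3) * b (o4 1)))
         (- (a (o4 1) * b (o4 2) - a (o4 2) * b (o4 1))),
   mk4 0 0 0 0).
Definition VFT (F : fieldType) (Z : comAlgType F) (delta : Z -> Z) (a b : {ffun 'I_4 -> Z}) : JCK Z :=
  (mk4 (delta (a (o4 0)) * b (o4 0) + a (o4 1) * b (o4 1) + a (o4 2) * b (o4 2) - a (o4 3) * b (o4 3)) 0 0 0,
   mk4 0 (a (o4 1) * b (o4 0)) (a (o4 2) * b (o4 0)) (a (o4 3) * b (o4 0))).
Definition VTF (F : fieldType) (Z : comAlgType F) (delta : Z -> Z) (a b : {ffun 'I_4 -> Z}) : JCK Z :=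
  (mk4 (- (delta (b (o4 0)) * a (o4 0) + b (o4 1) * a (o4 1) + b (o4 2) * a (o4 2) - b (o4 3) * a (o4 3))) 0 0 0,
   mk4 0 (- (b (o4 1) * a (o4 0))) (- (b (o4 2) * a (o4 0))) (- (b (o4 3) * a (o4 0)))).
Definition VTT (F : fieldType) (Z : comAlgType F) (a b : {ffun 'I_4 -> Z}) : JCK Z :=
  (mk4 0 (a (o4 0) * b (o4 1) + b (o4 0) * a (o4 1))
         (a (o4 0) * b (o4 2) + b (o4 0) * a (o4 2))
         (a (o4 0) * b (o4 3) + b (o4 0) * a (o4 3)),
   mk4 (a (o4 0) * b (o4 0)) 0 0 0).

Lemma pairB (F : fieldType) (Z : comAlgType F) (x1 y1 x2 y2 : {ffun 'I_4 -> Z}) :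
  ((x1, y1) : JCK Z) - (x2, y2) = (x1 - x2, y1 - y2). Proof. by []. Qed.
Lemma pairD (F : fieldType) (Z : comAlgType F) (x1 y1 x2 y2 : {ffun 'I_4 -> Z}) :
  ((x1, y1) : JCK Z) + (x2, y2) = (x1 + x2, y1 + y2). Proof. by []. Qed.
Lemma pairZ (F : fieldType) (Z : comAlgType F) a (x1 y1 : {ffun 'I_4 -> Z}) :
  a *: ((x1, y1) : JCK Z) = (a *: x1, a *: y1). Proof. by []. Qed.

Opaque ck_ee ck_eo ck_oo PhiE PhiO mk4.

Lemma DFF (F : fieldType) (Z : comAlgType F) (delta : {linear Z -> Z}) :
  (forall f g : Z, delta (f * g) = delta f * g + f * delta g) ->
  forall (a b : {ffun 'I_4 -> Z}) (c : JCK Z),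
  ck_D delta false false (a, 0) (b, 0) c = Phi delta (VFF a b) c.
Proof.
move=> HL a b [c1 c2].
have dD : forall x y, delta (x + y) = delta x + delta y by move=> x y; rewrite raddfD.
have dB : forall x y, delta (x - y) = delta x - delta y by move=> x y; rewrite raddfB.
have dN : forall x, delta (- x) = - delta x by move=> x; rewrite raddfN.
have d0 : delta 0 = 0 by rewrite raddf0.
rewrite /ck_D /ck_mul /Phi /VFF !pr1 !pr2 scale1r pairB.
congr (_, _); apply/ffunP => k; case: (ord4P k) => [->|[->|[->|->]]];
rewrite !(negfE,addfE,subfE,scalefE,zerofE);
rewrite ?(PE0,PE1,PE2,PE3,PO0,PO1,PO2,PO3,ee0,ee1,ee2,ee3,eo0,eo1,eo2,eo3,oo0,oo1,oo2,oo3,mk0,mk1,mk2,mk3);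
rewrite ?(negfE,addfE,subfE,scalefE,zerofE);
rewrite ?(PE0,PE1,PE2,PE3,PO0,PO1,PO2,PO3,ee0,ee1,ee2,ee3,eo0,eo1,eo2,eo3,oo0,oo1,oo2,oo3,mk0,mk1,mk2,mk3);
rewrite ?(negfE,addfE,subfE,scalefE,zerofE);
rewrite ?(dD,dB,dN,d0,HL); ring.
Qed.

Lemma DFT (F : fieldType) (Z : comAlgType F) (delta : {linear Z -> Z}) :
  (forall f g : Z, delta (f * g) = delta f * g + f * delta g) ->
  forall (a b : {ffun 'I_4 -> Z}) (c : JCK Z),
  ck_D delta false true (a, 0) (0, b) c = Phi delta (VFT delta a b) c.
Proof.
move=> HL a b [c1 c2].
have dD : forall x y, delta (x + y) = delta x + delta y by move=> x y; rewrite raddfD.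
have dB : forall x y, delta (x - y) = delta x - delta y by move=> x y; rewrite raddfB.
have dN : forall x, delta (- x) = - delta x by move=> x; rewrite raddfN.
have d0 : delta 0 = 0 by rewrite raddf0.
rewrite /ck_D /ck_mul /Phi /VFT !pr1 !pr2 scale1r pairB.
congr (_, _); apply/ffunP => k; case: (ord4P k) => [->|[->|[->|->]]];
rewrite !(negfE,addfE,subfE,scalefE,zerofE);
rewrite ?(PE0,PE1,PE2,PE3,PO0,PO1,PO2,PO3,ee0,ee1,ee2,ee3,eo0,eo1,eo2,eo3,oo0,oo1,oo2,oo3,mk0,mk1,mk2,mk3);
rewrite ?(negfE,addfE,subfE,scalefE,zerofE);
rewrite ?(PE0,PE1,PE2,PE3,PO0,PO1,PO2,PO3,ee0,ee1,ee2,ee3,eo0,eo1,eo2,eo3,oo0,oo1,oo2,oo3,mk0,mk1,mk2,mk3);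
rewrite ?(negfE,addfE,subfE,scalefE,zerofE);
rewrite ?(dD,dB,dN,d0,HL); ring.
Qed.

Lemma DTF (F : fieldType) (Z : comAlgType F) (delta : {linear Z -> Z}) :
  (forall f g : Z, delta (f * g) = delta f * g + f * delta g) ->
  forall (a b : {ffun 'I_4 -> Z}) (c : JCK Z),
  ck_D delta true false (0, a) (b, 0) c = Phi delta (VTF delta a b) c.
Proof.
move=> HL a b [c1 c2].
have dD : forall x y, delta (x + y) = delta x + delta y by move=> x y; rewrite raddfD.
have dB : forall x y, delta (x - y) = delta x - delta y by move=> x y; rewrite raddfB.
have dN : forall x, delta (- x) = - delta x by move=> x; rewrite raddfN.
have d0 : delta 0 = 0 by rewrite raddf0.
rewrite /ck_D /ck_mul /Phi /VTF !pr1 !pr2 scale1r pairB.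
congr (_, _); apply/ffunP => k; case: (ord4P k) => [->|[->|[->|->]]];
rewrite !(negfE,addfE,subfE,scalefE,zerofE);
rewrite ?(PE0,PE1,PE2,PE3,PO0,PO1,PO2,PO3,ee0,ee1,ee2,ee3,eo0,eo1,eo2,eo3,oo0,oo1,oo2,oo3,mk0,mk1,mk2,mk3);
rewrite ?(negfE,addfE,subfE,scalefE,zerofE);
rewrite ?(PE0,PE1,PE2,PE3,PO0,PO1,PO2,PO3,ee0,ee1,ee2,ee3,eo0,eo1,eo2,eo3,oo0,oo1,oo2,oo3,mk0,mk1,mk2,mk3);
rewrite ?(negfE,addfE,subfE,scalefE,zerofE);
rewrite ?(dD,dB,dN,d0,HL); ring.
Qed.

Lemma DTT (F : fieldType) (Z : comAlgType F) (delta : {linear Z -> Z}) :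
  (forall f g : Z, delta (f * g) = delta f * g + f * delta g) ->
  forall (a b : {ffun 'I_4 -> Z}) (c : JCK Z),
  ck_D delta true true (0, a) (0, b) c = Phi delta (VTT a b) c.
Proof.
move=> HL a b [c1 c2].
have dD : forall x y, delta (x + y) = delta x + delta y by move=> x y; rewrite raddfD.
have dB : forall x y, delta (x - y) = delta x - delta y by move=> x y; rewrite raddfB.
have dN : forall x, delta (- x) = - delta x by move=> x; rewrite raddfN.
have d0 : delta 0 = 0 by rewrite raddf0.
rewrite /ck_D /ck_mul /Phi /VTT !pr1 !pr2 scaleN1r opprK pairD.
congr (_, _); apply/ffunP => k; case: (ord4P k) => [->|[->|[->|->]]];
rewrite !(negfE,addfE,subfE,scalefE,zerofE);
rewrite ?(PE0,PE1,PE2,PE3,PO0,PO1,PO2,PO3,ee0,ee1,ee2,ee3,eo0,eo1,eo2,eo3,oo0,oo1,oo2,oo3,mk0,mk1,mk2,mk3);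
rewrite ?(negfE,addfE,subfE,scalefE,zerofE);
rewrite ?(PE0,PE1,PE2,PE3,PO0,PO1,PO2,PO3,ee0,ee1,ee2,ee3,eo0,eo1,eo2,eo3,oo0,oo1,oo2,oo3,mk0,mk1,mk2,mk3);
rewrite ?(negfE,addfE,subfE,scalefE,zerofE);
rewrite ?(dD,dB,dN,d0,HL); ring.
Qed.

Opaque ck_ee ck_eo ck_oo PhiE PhiO mk4.

Lemma indep_sub (F : fieldType) (V : lmodType F) (K : Type) (e : K -> V) :
  (forall (n : nat) (f : 'I_n -> K) (c : 'I_n -> F), injective f ->
     \sum_(k < n) c k *: e (f k) = 0 -> forall k, c k = 0) ->
  forall n (g : 'I_n -> K) (c : 'I_n -> F) (P : pred 'I_n),
  {in P &, injective g} -> \sum_(k < n | P k) c k *: e (g k) = 0 ->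
  forall k, P k -> c k = 0.
Proof.
move=> Hind n g c P ginj Hs k Pk.
have Pk' : k \in P by [].
have := Hind #|P| (fun j => g (enum_val j)) (fun j => c (enum_val j)).
move=> /(_ _ _ (enum_rank_in Pk' k)); rewrite enum_rankK_in //; apply.
- move=> i j /ginj H; apply: enum_val_inj; apply: H; exact: enum_valP.
- by rewrite -(big_enum_val (A := P) (fun j => c j *: e (g j))).

Qed.

Definition in_span (F : fieldType) (V : lmodType F) (I : Type) (e : I -> V) (v : V) :=
  exists (n : nat) (f : 'I_n -> I) (c : 'I_n -> F), v = \sum_(k < n) c k *: e (f k).

Lemma span0 (F : fieldType) (V : lmodType F) (I : Type) (e : I -> V) : in_span e 0.
Proof. by exists 0%N, (fun k : 'I_0 => False_rect I (Bool.diff_false_true (ltn_ord k))), (fun _ => 0); rewrite big_ord0. Qed.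

Lemma spanD (F : fieldType) (V : lmodType F) (I : Type) (e : I -> V) u v :
  in_span e u -> in_span e v -> in_span e (u + v).
Proof.
move=> [n1 [f1 [c1 ->]]] [n2 [f2 [c2 ->]]].
exists (n1 + n2)%N, (fun k => match split k with inl j => f1 j | inr j => f2 j end),
  (fun k => match split k with inl j => c1 j | inr j => c2 j end).
rewrite big_split_ord /=; congr (_ + _); apply: eq_bigr => j _.
- by have := unsplitK (inl j : 'I_n1 + 'I_n2) => /= ->.
- by have := unsplitK (inr j : 'I_n1 + 'I_n2) => /= ->.
Qed.

Lemma spanS (F : fieldType) (V : lmodType F) (I : Type) (e : I -> V) m (G : 'I_m -> V) :
  (forall i, in_span e (G i)) -> in_span e (\sum_(i < m) G i).
Proof. move=> H; apply: (big_ind (in_span e)) => //; [exact: span0 | exact: spanD]. Qed.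


Definition sl (F : fieldType) (Z : comAlgType F) (j : 'I_8) (u : Z) : JCK Z :=
  ([ffun t : 'I_4 => if (t : nat) == (j : nat) then u else 0],
   [ffun t : 'I_4 => if (t + 4)%N == (j : nat) then u else 0]).

Definition coord (F : fieldType) (Z : comAlgType F) (i : 'I_8) (v : JCK Z) : Z :=
  if (i < 4)%N then v.1 (inord i) else v.2 (inord (i - 4)).

Lemma coord_sl (F : fieldType) (Z : comAlgType F) (i j : 'I_8) (u : Z) :
  coord i (sl j u) = if i == j then u else 0.
Proof.
rewrite /coord /sl /=; case: ifP => hi; rewrite ffunE.
  by rewrite (@inordK 3 i).
have h4 : (4 <= i)%N by rewrite leqNgt hi.
have h8 : (i - 4 < 4)%N.
  by rewrite ltn_subLR //; exact: (ltn_ord i).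
by rewrite (@inordK 3 (i - 4)) // (subnK h4).
Qed.


Lemma coordD (F : fieldType) (Z : comAlgType F) i (v w : JCK Z) : coord i (v + w) = coord i v + coord i w.
Proof. by rewrite /coord; case: ifP => _; rewrite ffunE. Qed.
Lemma coord0 (F : fieldType) (Z : comAlgType F) i : coord i (0 : JCK Z) = 0.
Proof. by rewrite /coord; case: ifP => _; rewrite ffunE. Qed.
Lemma coordZ (F : fieldType) (Z : comAlgType F) i a (v : JCK Z) : coord i (a *: v) = a *: coord i v.
Proof. by rewrite /coord; case: ifP => _; rewrite ffunE. Qed.
Lemma coordS (F : fieldType) (Z : comAlgType F) i n (G : 'I_n -> JCK Z) :
  coord i (\sum_(k < n) G k) = \sum_(k < n) coord i (G k).
Proof. exact: (big_morph (coord i) (coordD i) (coord0 _ i)). Qed.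

Lemma slD (F : fieldType) (Z : comAlgType F) j (u v : Z) : sl j (u + v) = sl j u + sl j v.
Proof. by apply: JCK_ext => t; rewrite /= !ffunE; case: ifP; rewrite ?addr0. Qed.
Lemma sl0 (F : fieldType) (Z : comAlgType F) j : sl j (0 : Z) = 0.
Proof. by apply: JCK_ext => t; rewrite /= !ffunE; case: ifP. Qed.
Lemma slZ (F : fieldType) (Z : comAlgType F) j a (u : Z) : sl j (a *: u) = a *: sl j u.
Proof. by apply: JCK_ext => t; rewrite /= !ffunE; case: ifP; rewrite ?scaler0. Qed.
Lemma slS (F : fieldType) (Z : comAlgType F) j n (G : 'I_n -> Z) :
  sl j (\sum_(k < n) G k) = \sum_(k < n) sl j (G k).
Proof. exact: (big_morph (sl j) (slD j) (sl0 _ j)). Qed.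

Lemma decomp (F : fieldType) (Z : comAlgType F) (v : JCK Z) :
  v = \sum_(i < 8) sl i (coord i v).
Proof.
apply: JCK_ext => t; rewrite ?(fstS, sndS) sum_ffunE.
- pose i0 : 'I_8 := widen_ord (isT : (4 <= 8)%N) t.
  rewrite (bigD1 i0) //= big1 ?addr0.
  + rewrite ffunE eqxx /coord /= ltn_ord inord_val //.
  + move=> i ne; rewrite ffunE; case: eqP => // h; case/eqP: ne; apply/val_inj; by rewrite /= h.
- have lt8 : (t + 4 < 8)%N by have := ltn_ord t; rewrite -(ltn_add2r 4).
  pose i0 : 'I_8 := Ordinal lt8.
  rewrite (bigD1 i0) //= big1 ?addr0.
  + rewrite ffunE eqxx /coord /=.
    have -> : (t + 4 < 4)%N = false by rewrite ltnNge leq_addl.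
    by rewrite addnK inord_val.
  + move=> i ne; rewrite ffunE; case: eqP => // h; case/eqP: ne; apply/val_inj; by rewrite /= h.
Qed.


Lemma Jbasis (F : fieldType) (Z : comAlgType F) (K : Type) (eZ : K -> Z) :
  is_basis eZ -> is_basis (fun p : 'I_8 * K => sl p.1 (eZ p.2)).
Proof.
move=> [Hind Hsp]; split.
- move=> n f c finj Hs k.
  have H : \sum_(t < n | (f k).1 == (f t).1) c t *: eZ (f t).2 = 0.
    have := congr1 (coord (f k).1) Hs; rewrite coordS coord0 => E; rewrite -[RHS]E.
    by rewrite big_mkcond; apply: eq_bigr => t _; rewrite coordZ coord_sl; case: ifP; rewrite ?scaler0.
  apply: (indep_sub Hind _ H); last by [].
  move=> t1 t2 /eqP h1 /eqP h2 h; apply: finj.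
  by case: (f t1) (f t2) h1 h2 h => [a1 b1] [a2 b2] /= -> -> ->.
- move=> v; rewrite (decomp v); apply: (spanS (e := fun p : 'I_8 * K => sl p.1 (eZ p.2))) => i.
  have [n [g [d ->]]] := Hsp (coord i v).
  rewrite slS; exists n, (fun t => (i, g t)), d; apply: eq_bigr => t _; by rewrite slZ.
Qed.


Lemma pairD' (F : fieldType) (Z : comAlgType F) (x1 y1 x2 y2 : {ffun 'I_4 -> Z}) :
  ((x1, y1) : JCK Z) + (x2, y2) = (x1 + x2, y1 + y2). Proof. by []. Qed.
Lemma pairZ' (F : fieldType) (Z : comAlgType F) a (x1 y1 : {ffun 'I_4 -> Z}) :
  a *: ((x1, y1) : JCK Z) = (a *: x1, a *: y1). Proof. by []. Qed.

Lemma PhiD (F : fieldType) (Z : comAlgType F) (delta : {linear Z -> Z}) (v w c : JCK Z) :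
  Phi delta (v + w) c = Phi delta v c + Phi delta w c.
Proof.
have dD : forall x y, delta (x + y) = delta x + delta y by move=> x y; rewrite raddfD.
case: v w => [v1 v2] [w1 w2].
rewrite /Phi pairD'; congr (_, _); apply/ffunP => k; case: (ord4P k) => [->|[->|[->|->]]];
rewrite addfE ?(PE0,PE1,PE2,PE3,PO0,PO1,PO2,PO3) ?pr1 ?pr2 !addfE ?dD; ring.
Qed.

Lemma PhiZ (F : fieldType) (Z : comAlgType F) (delta : {linear Z -> Z}) a (v c : JCK Z) :
  Phi delta (a *: v) c = a *: Phi delta v c.
Proof.
have dZ : forall x, delta (a *: x) = a *: delta x by move=> x; rewrite linearZ.
have [s sc] : exists s : Z, forall x, a *: x = s * x by exists a%:A => x; rewrite mulr_algl.
case: v => [v1 v2].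
rewrite /Phi !pairZ'; congr (_, _); apply/ffunP => k; case: (ord4P k) => [->|[->|[->|->]]];
rewrite scalefE ?(PE0,PE1,PE2,PE3,PO0,PO1,PO2,PO3) ?pr1 ?pr2 !scalefE ?dZ !sc; ring.
Qed.

Lemma Phi0 (F : fieldType) (Z : comAlgType F) (delta : {linear Z -> Z}) (c : JCK Z) :
  Phi delta 0 c = 0.
Proof. by have := PhiZ delta 0 0 c; rewrite !scale0r. Qed.

Lemma PhiS (F : fieldType) (Z : comAlgType F) (delta : {linear Z -> Z}) n (d : 'I_n -> F) (G : 'I_n -> JCK Z) c :
  Phi delta (\sum_(k < n) d k *: G k) c = \sum_(k < n) d k *: Phi delta (G k) c.
Proof.
rewrite (big_morph (fun v => Phi delta v c) (fun v w => PhiD delta v w c) (Phi0 delta c)).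
by apply: eq_bigr => k _; rewrite PhiZ.
Qed.


Lemma delta1 (F : fieldType) (Z : comAlgType F) (delta : {linear Z -> Z}) :
  (forall f g : Z, delta (f * g) = delta f * g + f * delta g) -> delta 1 = 0.
Proof. move=> HL; have H := HL 1 1; rewrite !mul1r mulr1 in H.
by apply: (addrI (delta 1)); rewrite addr0 -H. Qed.

Lemma Phi_inj (F : fieldType) (Z : comAlgType F) (delta : {linear Z -> Z}) :
  (2%:R : F) != 0 ->
  (forall f g : Z, delta (f * g) = delta f * g + f * delta g) ->
  (forall z : Z, exists (n : nat) (f g : 'I_n -> Z),
     z = \sum_(k < n) f k * delta (g k)) ->
  forall v : JCK Z, (forall c, Phi delta v c = 0) -> v = 0.
Proof.
move=> H2 HL Hsp v Hv.
have d1 := delta1 HL; have d0 : delta 0 = 0 by rewrite raddf0.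
pose t1 : JCK Z := (mk4 0 1 0 0, mk4 0 0 0 0).
pose t2 : JCK Z := (mk4 0 0 1 0, mk4 0 0 0 0).
pose t3 : JCK Z := (mk4 0 0 0 1, mk4 0 0 0 0).
have G1 := fun i => congr1 (fun u : JCK Z => u.1 i) (Hv t1).
have G2 := fun i => congr1 (fun u : JCK Z => u.2 i) (Hv t1).
have G3 := fun i => congr1 (fun u : JCK Z => u.1 i) (Hv t2).
have G4 := fun i => congr1 (fun u : JCK Z => u.2 i) (Hv t2).
have G5 := fun i => congr1 (fun u : JCK Z => u.2 i) (Hv t3).
move: (G1 (o4 2)) (G1 (o4 3)) (G2 (o4 0)) (G2 (o4 1)) (G3 (o4 3)) (G4 (o4 0)) (G5 (o4 0)).
rewrite /t1 /t2 /t3 /= ?(PE0,PE1,PE2,PE3,PO0,PO1,PO2,PO3) /= ?zerofE ?(mk0,mk1,mk2,mk3) ?d1 ?d0.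
rewrite ?(mulr0, mul0r, mulr1, subr0, sub0r, addr0, add0r, oppr0, opprK) => eB3 eB2 eC1 eA eB1 eC2 eC3.
have eE : v.2 (o4 0) = 0.
  have [n [f [g Hone]]] := Hsp 1.
  have Hg : forall k, - (2%:R * (v.2 (o4 0) * delta (g k))) = 0.
    move=> k; have := congr1 (fun u : JCK Z => u.1 (o4 0)) (Hv (mk4 (g k) 0 0 0, mk4 0 0 0 0)).
    rewrite /= PE0 /= ?zerofE ?(mk0,mk1,mk2,mk3).
    by rewrite !(mulr0, mul0r, mulr1, subr0, sub0r, addr0, add0r, oppr0, opprK).
  have : - (2%:R * v.2 (o4 0)) = 0.
    have -> : - (2%:R * v.2 (o4 0)) = - (2%:R * v.2 (o4 0)) * \sum_(k < n) f k * delta (g k).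
      by rewrite -Hone mulr1.
    rewrite mulr_sumr big1 // => k _.
    have -> : - (2%:R * v.2 (o4 0)) * (f k * delta (g k)) = f k * - (2%:R * (v.2 (o4 0) * delta (g k))).
      by ring.
    by rewrite Hg mulr0.
  move/eqP; rewrite oppr_eq0 mulr_natl -scaler_nat scaler_eq0 (negbTE H2) /=.
  by move/eqP.
apply: JCK_ext => k; rewrite ?fst0 ?snd0 zerofE; case: (ord4P k) => [->|[->|[->|->]]] //;
  by apply/eqP; rewrite -oppr_eq0; apply/eqP.
Qed.

Opaque ck_ee ck_eo ck_oo PhiE PhiO mk4.

Definition vD (F : fieldType) (Z : comAlgType F) (delta : Z -> Z) (p q : bool) (a b : JCK Z) : JCK Z :=
  if p then (if q then VTT a.2 b.2 else VTF delta a.2 b.1)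
  else (if q then VFT delta a.1 b.2 else VFF a.1 b.1).

Lemma D_Phi (F : fieldType) (Z : comAlgType F) (delta : {linear Z -> Z}) :
  (forall f g : Z, delta (f * g) = delta f * g + f * delta g) ->
  forall p q (a b : JCK Z), ck_homog p a -> ck_homog q b ->
  forall c, ck_D delta p q a b c = Phi delta (vD delta p q a b) c.
Proof.
move=> HL [] [] [a1 a2] [b1 b2]; rewrite /ck_homog /= => -> -> c.
- exact: DTT.
- exact: DTF.
- exact: DFT.
- exact: DFF.
Qed.

Lemma inder_of (F : fieldType) (Z : comAlgType F) (delta : Z -> Z) (phi : JCK Z -> JCK Z) p q (a b : JCK Z) :
  ck_homog p a -> ck_homog q b -> (forall x, phi x = ck_D delta p q a b x) -> in_Inder delta phi.
Proof.
move=> ha hb H; exists 1%N, (fun _ => p), (fun _ => q), (fun _ => a), (fun _ => b), (fun _ => 1); split => //.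
by move=> x; rewrite big_ord1 scale1r.
Qed.

Definition o8 (n : nat) : 'I_8 := inord n.
Lemma o8K n : (n < 8)%N -> nat_of_ord (o8 n) = n.
Proof. by move=> h; rewrite /o8 inordK. Qed.

Lemma ord8P (k : 'I_8) : exists2 n, (n < 8)%N & k = o8 n.
Proof. by exists (nat_of_ord k) => //; apply/val_inj; rewrite /= o8K. Qed.

Lemma slE1 (F : fieldType) (Z : comAlgType F) (m t : nat) (u : Z) : (m < 8)%N -> (t < 4)%N ->
  (sl (o8 m) u).1 (o4 t) = if t == m then u else 0.
Proof. by move=> hm ht; rewrite /sl /= ffunE o4K // o8K. Qed.
Lemma slE2 (F : fieldType) (Z : comAlgType F) (m t : nat) (u : Z) : (m < 8)%N -> (t < 4)%N ->
  (sl (o8 m) u).2 (o4 t) = if (t + 4)%N == m then u else 0.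
Proof. by move=> hm ht; rewrite /sl /= ffunE o4K // o8K. Qed.


Lemma mem_Inder (F : fieldType) (Z : comAlgType F) (delta : {linear Z -> Z}) :
  (forall f g : Z, delta (f * g) = delta f * g + f * delta g) ->
  forall (i : 'I_8) (u : Z), in_Inder delta (Phi delta (sl i u)).
Proof.
move=> HL i u; have d1 := delta1 HL; have d0 : delta 0 = 0 by rewrite raddf0.
have [m hm ->] := ord8P i.
have Hc : forall p q a b, ck_homog p a -> ck_homog q b -> sl (o8 m) u = vD delta p q a b ->
   in_Inder delta (Phi delta (sl (o8 m) u)).
  move=> p q a b ha hb E; apply: (inder_of ha hb) => x; by rewrite D_Phi // E.
move: Hc; case: m hm => [|[|[|[|[|[|[|[|m]]]]]]]] hm Hc //.
- apply: (Hc false true (mk4 0 1 0 0, 0) (0, mk4 0 u 0 0)) => //; apply: JCK_ext => k; case: (ord4P k) => [->|[->|[->|->]]];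
    rewrite ?slE1 ?slE2 //= /vD /VFT /VTT /= ?(mk0,mk1,mk2,mk3) ?zerofE ?d0 ?d1; ring.
- apply: (Hc true true (0, mk4 1 0 0 0) (0, mk4 0 u 0 0)) => //; apply: JCK_ext => k; case: (ord4P k) => [->|[->|[->|->]]];
    rewrite ?slE1 ?slE2 //= /vD /VFT /VTT /= ?(mk0,mk1,mk2,mk3) ?zerofE ?d0 ?d1; ring.
- apply: (Hc true true (0, mk4 1 0 0 0) (0, mk4 0 0 u 0)) => //; apply: JCK_ext => k; case: (ord4P k) => [->|[->|[->|->]]];
    rewrite ?slE1 ?slE2 //= /vD /VFT /VTT /= ?(mk0,mk1,mk2,mk3) ?zerofE ?d0 ?d1; ring.
- apply: (Hc true true (0, mk4 1 0 0 0) (0, mk4 0 0 0 u)) => //; apply: JCK_ext => k; case: (ord4P k) => [->|[->|[->|->]]];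
    rewrite ?slE1 ?slE2 //= /vD /VFT /VTT /= ?(mk0,mk1,mk2,mk3) ?zerofE ?d0 ?d1; ring.
- apply: (Hc true true (0, mk4 1 0 0 0) (0, mk4 u 0 0 0)) => //; apply: JCK_ext => k; case: (ord4P k) => [->|[->|[->|->]]];
    rewrite ?slE1 ?slE2 //= /vD /VFT /VTT /= ?(mk0,mk1,mk2,mk3) ?zerofE ?d0 ?d1; ring.
- apply: (Hc false true (mk4 0 1 0 0, 0) (0, mk4 u 0 0 0)) => //; apply: JCK_ext => k; case: (ord4P k) => [->|[->|[->|->]]];
    rewrite ?slE1 ?slE2 //= /vD /VFT /VTT /= ?(mk0,mk1,mk2,mk3) ?zerofE ?d0 ?d1; ring.
- apply: (Hc false true (mk4 0 0 1 0, 0) (0, mk4 u 0 0 0)) => //; apply: JCK_ext => k; case: (ord4P k) => [->|[->|[->|->]]];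
    rewrite ?slE1 ?slE2 //= /vD /VFT /VTT /= ?(mk0,mk1,mk2,mk3) ?zerofE ?d0 ?d1; ring.
- apply: (Hc false true (mk4 0 0 0 1, 0) (0, mk4 u 0 0 0)) => //; apply: JCK_ext => k; case: (ord4P k) => [->|[->|[->|->]]];
    rewrite ?slE1 ?slE2 //= /vD /VFT /VTT /= ?(mk0,mk1,mk2,mk3) ?zerofE ?d0 ?d1; ring.
Qed.

Unset Implicit Arguments.

Theorem corollary4p5 (F : fieldType) (Z : comAlgType F) (delta : {linear Z -> Z}) :
  (2%:R : F) != 0 ->
  (forall f g : Z, delta (f * g) = delta f * g + f * delta g) ->
  (forall z : Z, exists (n : nat) (f g : 'I_n -> Z),
     z = \sum_(k < n) f k * delta (g k)) ->
  forall (K : Type) (eZ : K -> Z), is_basis eZ ->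
  exists (I IJ : Type) (eI : I -> JCK Z -> JCK Z) (eJ : IJ -> JCK Z),
    is_basis_fun (in_Inder delta) eI /\ is_basis eJ /\
    (exists h : I -> IJ, bijective h) /\
    (exists h : IJ -> ('I_8 * K)%type, bijective h).
Proof.
move=> H2 HL Hsp K eZ HB.
have [Jind Jsp] := Jbasis HB.
exists ('I_8 * K)%type, ('I_8 * K)%type,
  (fun p => Phi delta (sl p.1 (eZ p.2))), (fun p => sl p.1 (eZ p.2)).
split; last first.
  split; first exact: Jbasis.
  by split; exists id; exists id.
split; first by move=> [i k]; exact: mem_Inder.
split.
- move=> n f c finj H; apply: (Jind n f c finj).
  apply: (Phi_inj H2 HL Hsp) => x; rewrite PhiS; exact: H.
- move=> phi [n [p [q [a [b [c [Hh Hphi]]]]]]].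
  pose w := \sum_(k < n) c k *: vD delta (p k) (q k) (a k) (b k).
  have [m [f [d Hw]]] := Jsp w.
  exists m, f, d => x.
  rewrite Hphi -PhiS.
  have -> : \sum_(k < n) c k *: ck_D delta (p k) (q k) (a k) (b k) x = Phi delta w x.
    rewrite /w PhiS; apply: eq_bigr => k _; case: (Hh k) => ha hb; by rewrite D_Phi.
  by rewrite Hw.
Qed.
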